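(* Let $H$ be a graph with $\chi(H)=r\geq 3$ and $\gcd(H)>1$. Then for every integer $n\geq r$ there exists a balanced $r$-partite graph $G$ on $rn$ vertices with $\delta^*(G)\geq \left(1-\frac{1}{\chi^*(H)}\right)n-1=\left(1-\frac1r\right)n-1$ that has no perfect $H$-tiling.
   Context: An $H$-tiling in $G$ is a collection of vertex-disjoint copies of $H$ in $G$; it is perfect if it covers every vertex of $G$. For an $r$-partite graph $G$ with vertex classes $V_1,\dots,V_r$, $G$ is balanced if all classes have the same size, and $\delta^*(G)$ is the largest integer $m$ such that for all $i\neq j$ every vertex of $V_i$ has at least $m$ neighbours in $V_j$. For $H$ with $\chi(H)=r$, let $\mathcal C$ be the set of proper $r$-colourings of $H$ with colour classes $X_1^\phi,\dots,X_r^\phi$, and $\mathcal D(H)=\bigcup_{\phi\in\mathcal C}\{|X_i^\phi|-|X_j^\phi|: i,j\in[r]\}$; $\gcd(H)$ is the greatest common divisor of the elements of $\mathcal D(H)$ if $\mathcal D(H)\ne\{0\}$ and $\infty$ otherwise. $\chi^*(H)=\chi(H)$ when $\gcd(H)\neq 1$. *)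

(* Defs.v *)
From HB Require Import structures.
From mathcomp Require Import all_boot all_order all_algebra.
Set Implicit Arguments. Unset Strict Implicit. Unset Printing Implicit Defensive.
Import Order.TTheory GRing.Theory Num.Theory.

Definition simple_graph (V : finType) (e : rel V) : Prop :=
  symmetric e /\ irreflexive e.

Definition proper_col (V : finType) (e : rel V) (k : nat) (c : V -> 'I_k) : Prop :=
  forall x y, e x y -> c x != c y.

Definition colorable (V : finType) (e : rel V) (k : nat) : Prop :=
  exists c : V -> 'I_k, proper_col e c.

Definition chromatic_number_eq (V : finType) (e : rel V) (r : nat) : Prop :=
  colorable e r /\ ~ colorable e r.-1.

Definition proper_colb (V : finType) (e : rel V) (r : nat) (c : {ffun V -> 'I_r}) : bool :=
  [forall x, forall y, e x y ==> (c x != c y)].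

Definition col_class (V : finType) (r : nat) (c : {ffun V -> 'I_r}) (i : 'I_r) : {set V} :=
  [set x | c x == i].

(* gcd(H), with the convention that the value 0 encodes "infinity"
   (i.e. D(H) = {0}).  The gcd of the integer differences |X_i|-|X_j| over all
   proper r-colourings and all i, j equals the gcd of their absolute values;
   since both (i,j) and (j,i) occur, the truncated nat subtraction
   #|X_i| - #|X_j| over all ordered pairs yields exactly all |X_i|-|X_j|
   absolute values plus zeros (zeros do not change a gcd). *)
Definition gcdH (V : finType) (e : rel V) (r : nat) : nat :=
  \big[gcdn/0]_(c : {ffun V -> 'I_r} | proper_colb e c)
    \big[gcdn/0]_(i : 'I_r) \big[gcdn/0]_(j : 'I_r)
       (#|col_class c i| - #|col_class c j|).

(* Balanced r-partite graph on vertex set 'I_r * 'I_n, with classes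
   V_i = {(i, t) | t : 'I_n}: no edges inside a class. *)
Definition balanced_rpartite (r n : nat) (eG : rel ('I_r * 'I_n)) : Prop :=
  simple_graph eG /\ forall u v : 'I_r * 'I_n, u.1 = v.1 -> ~~ eG u v.

Definition deg_in (r n : nat) (eG : rel ('I_r * 'I_n)) (v : 'I_r * 'I_n) (j : 'I_r) : nat :=
  #|[set u : 'I_r * 'I_n | (u.1 == j) && eG v u]|.

(* delta*(G) >= x  (x rational): every vertex of V_i has at least x neighbours in
   V_j, for all i <> j. *)
Definition min_cross_deg_ge (r n : nat) (eG : rel ('I_r * 'I_n)) (x : rat) : Prop :=
  forall (v : 'I_r * 'I_n) (j : 'I_r), v.1 != j -> (x <= ((deg_in eG v j)%:R : rat))%R.

Definition H_copy (V W : finType) (e : rel V) (eG : rel W) (f : V -> W) : Prop :=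
  injective f /\ forall x y, e x y -> eG (f x) (f y).

Definition perfect_tiling (V W : finType) (e : rel V) (eG : rel W) : Prop :=
  exists (k : nat) (f : 'I_k -> V -> W),
    (forall t, H_copy e eG (f t)) /\
    (forall t t' x y, t != t' -> f t x != f t' y) /\
    (forall w, exists t x, f t x = w).

(* Main.v *)
Require Import Defs.
From HB Require Import structures.
From mathcomp Require Import all_boot all_order all_algebra zify ring lra.
Import Order.TTheory GRing.Theory Num.Theory.

Section S_Part1.
Set Implicit Arguments. Unset Strict Implicit.

Lemma count_res (n r k m : nat) : 0 < r ->
  (forall t, t < n -> t %% r = k -> t %/ r <= m) ->
  #|[set t : 'I_n | t %% r == k]| <= m.+1.
Proof.
move=> r0 H.
rewrite -(@card_in_imset _ _ (fun t : 'I_n => (inord (t %/ r) : 'I_m.+1))).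
  by apply: leq_trans (max_card _) _; rewrite card_ord.
move=> t t'; rewrite !inE => /eqP ht /eqP ht' /(congr1 val) /=.
rewrite !inordK ?ltnS; try by apply: H.
move=> e; apply: val_inj => /=.
by rewrite (divn_eq t r) (divn_eq t' r) ht ht' e.
Qed.

Lemma count_res1 (n r k : nat) : 0 < r ->
  #|[set t : 'I_n | t %% r == k]| <= (n %/ r).+1.
Proof.
move=> r0; apply: count_res => // t tn _.
by apply: leq_div2r; apply: ltnW.
Qed.

Lemma count_res2 (n r q : nat) : 0 < r -> n %/ r = q.+1 ->
  #|[set t : 'I_n | t %% r == r.-1]| <= q.+1.
Proof.
move=> r0 hq; apply: count_res => // t tn ht.
rewrite -ltnS -hq leq_divRL // mulSn.
have := divn_eq t r; rewrite ht => e.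
have : r + t %/ r * r = t.+1 by rewrite addnC {2}e -addnS prednK.
move=> ->; exact: tn.
Qed.

Lemma big_gcd_dvd (I : finType) (P : pred I) (F : I -> nat) i :
  P i -> \big[gcdn/0]_(j | P j) F j %| F i.
Proof. by move=> Pi; rewrite (bigD1 i) //= dvdn_gcdl. Qed.

End S_Part1.

Section S_Part2.
Set Implicit Arguments. Unset Strict Implicit.

Section Cons.
Variables (p n : nat).
Definition kap0 (u : 'I_p.+1 * 'I_n) : 'I_p.+1 := (u.1 + inZp u.2)%R.
Definition kap (u : 'I_p.+1 * 'I_n) : 'I_p.+1 :=
  if (u.1 == 0%R) && (val u.2 == 0) then ord_max else kap0 u.
Definition eGc (u v : 'I_p.+1 * 'I_n) : bool := (u.1 != v.1) && (kap u != kap v).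

Lemma addZp_eq (a j c : 'I_p.+1) : ((j + a)%R == c) = (a == (c - j)%R).
Proof. by rewrite addrC eq_sym -subr_eq eq_sym. Qed.

Lemma inZp_eq t (c : 'I_p.+1) : (inZp t == c) = (t %% p.+1 == c).
Proof. by rewrite -(inj_eq val_inj). Qed.

Lemma class_count (j c : 'I_p.+1) : p.+1 <= n ->
  #|[set t : 'I_n | kap (j, t) == c]| <= (n %/ p.+1).+1.
Proof.
move=> hn.
have [j0|jn0] := eqVneq j 0%R; last first.
  apply: leq_trans (count_res1 n (val (c - j)%R) (ltn0Sn p)).
  apply: subset_leq_card; apply/subsetP => t; rewrite !inE /kap /kap0 /= (negbTE jn0) /=.
  by rewrite addZp_eq inZp_eq.
subst j.
have [cm|cnm] := eqVneq c ord_max; last first.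
  apply: leq_trans (count_res1 n (val c) (ltn0Sn p)).
  apply: subset_leq_card; apply/subsetP => t; rewrite !inE /kap /kap0 /=. idtac.
  case: ifP => _; first by rewrite eq_sym (negbTE cnm).
  by rewrite add0r inZp_eq.
subst c.
have n0 : 0 < n by apply: leq_trans hn.
have [q hq] : exists q, n %/ p.+1 = q.+1.
  by exists (n %/ p.+1).-1; rewrite prednK // divn_gt0.
rewrite hq.
have HH := (@leq_trans #|[set Ordinal n0] :|: [set t : 'I_n | t %% p.+1 == p.+1.-1]|). apply: HH.
  apply: subset_leq_card; apply/subsetP => t; rewrite !inE /kap /kap0 /=. idtac.
  case: ifP => [/eqP h _|_]; first by apply/orP; left; apply/eqP/val_inj.
  by rewrite add0r inZp_eq => ->; rewrite orbT.
rewrite cardsU1; apply: (@leq_add _ _ 1 q.+1); first by case: (_ \notin _).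
exact: count_res2.
Qed.
End Cons.

End S_Part2.

Section S_Part3.
Set Implicit Arguments. Unset Strict Implicit.

Lemma deg_bound p n (v : 'I_p.+1 * 'I_n) (j : 'I_p.+1) : p.+1 <= n -> v.1 != j ->
  n - (n %/ p.+1).+1 <= deg_in (@eGc p n) v j.
Proof.
move=> hn vj.
set A := [set t : 'I_n | kap (j, t) == kap v].
have hA : #|A| <= (n %/ p.+1).+1 by exact: class_count.
have hC : #|~: A| = n - #|A| by have := cardsC A; rewrite card_ord; lia.
apply: (@leq_trans (n - #|A|)); first exact: leq_sub2l.
rewrite -hC -(@card_imset _ _ (pair j) (mem (~: A))); last by move=> a b [].
apply: subset_leq_card; apply/subsetP => u /imsetP [t]; rewrite !inE => ht ->.
by rewrite /= eqxx /eGc /= vj /= eq_sym.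
Qed.

Lemma rat_bound (r n : nat) : 1 < r -> r <= n ->
  ((1 - 1 / (r%:R : rat)) * n%:R - 1 <= (n - (n %/ r).+1)%:R)%R.
Proof.
move=> r1 hn.
have r0 : 0 < r by apply: ltnW.
have q1 : (n %/ r).+1 <= n by apply: ltn_Pdiv => //; apply: leq_trans hn.
have hq : ((n %/ r)%:R * r%:R <= (n%:R : rat))%R by rewrite -natrM ler_nat leq_divM.
have hx : ((n %/ r)%:R <= (n%:R : rat) / r%:R)%R by rewrite ler_pdivlMr // ltr0n.
rewrite natrB // -addn1 natrD.
have -> : ((1 - 1 / (r%:R : rat)) * n%:R = n%:R - n%:R / r%:R)%R.
  by rewrite mulrBl !mul1r mulrC.
lra.
Qed.

End S_Part3.

Section S_Part4.
Set Implicit Arguments. Unset Strict Implicit.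

Section Sums.
Variables (p n : nat).

Lemma sum_kap0 (k : 'I_p.+1) :
  \sum_(u : 'I_p.+1 * 'I_n) (kap0 u == k : nat) = n.
Proof.
have -> : \sum_(u : 'I_p.+1 * 'I_n) (kap0 u == k : nat)
   = \sum_(u : 'I_p.+1 * 'I_n) ((fun i t => (kap0 (i, t) == k : nat)) u.1 u.2).
  by apply: eq_bigr => -[i t].
rewrite -(pair_bigA _ (fun (i : 'I_p.+1) (t : 'I_n) => (kap0 (i, t) == k : nat))) exchange_big /=.
rewrite (eq_bigr (fun _ => 1)) ?sum_nat_const ?card_ord ?muln1 // => t _.
rewrite (bigD1 (k - inZp t)%R) //= /kap0 /= subrK eqxx big1 // => i /negbTE.
by move=> h; rewrite /kap0 /= eq_sym -subr_eq eq_sym h.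
Qed.

Variable n0 : 0 < n.
Let u0 : 'I_p.+1 * 'I_n := (0%R, Ordinal n0).

Lemma kap_u0 : kap u0 = ord_max.
Proof. by []. Qed.

Lemma kap0_u0 : kap0 u0 = 0%R.
Proof. by rewrite /kap0 /= add0r; apply: val_inj; rewrite /= mod0n. Qed.

Lemma kap_ne u : u != u0 -> kap u = kap0 u.
Proof.
move=> h; rewrite /kap; case: ifP => // /andP [/eqP h1 /eqP h2].
by move/eqP: h; case; case: u h1 h2 => i t /= -> h2; congr pair; apply: val_inj.
Qed.

Lemma split_kap (k : 'I_p.+1) :
  \sum_(u : 'I_p.+1 * 'I_n) (kap u == k : nat) + (0%R == k :> 'I_p.+1)
  = n + (ord_max == k).
Proof.
have := sum_kap0 k.
have -> : \sum_(u : 'I_p.+1 * 'I_n) (kap u == k : nat) =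
   (ord_max == k) + \sum_(u | u != u0) (kap0 u == k : nat).
  rewrite (bigD1 u0) //= kap_u0; congr addn.
  by apply: eq_bigr => u h; rewrite kap_ne.
have -> : \sum_(u : 'I_p.+1 * 'I_n) (kap0 u == k : nat) =
   (0%R == k :> 'I_p.+1) + \sum_(u | u != u0) (kap0 u == k : nat).
  by rewrite (bigD1 u0) //= kap0_u0.
lia.
Qed.
End Sums.

End S_Part4.

Lemma card_eq_sum (T : finType) (F : T -> nat) :
  #|[set x | F x != 0]| = #|[set x | F x != 0]|.
Proof. by []. Qed.

Theorem mainTheorem8 (V : finType) (e : rel V) (r : nat) :
  simple_graph e ->
  chromatic_number_eq e r ->
  3 <= r ->
  gcdH e r != 1 ->
  forall n : nat, r <= n ->
  exists eG : rel ('I_r * 'I_n),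
    balanced_rpartite eG /\
    min_cross_deg_ge eG ((1 - 1 / (r%:R : rat)) * n%:R - 1)%R /\
    ~ perfect_tiling e eG.
Proof.
case: r => [//|p] _ _ hp hg n hn.
have p2 : 1 < p by [].
have n0 : 0 < n by apply: leq_trans hn.
exists (@eGc p n); split; [split; [split|] | split].
- by move=> u v; rewrite /eGc eq_sym [kap v == _]eq_sym.
- by move=> u; rewrite /eGc eqxx.
- by move=> u v h; rewrite /eGc h eqxx.
- move=> v j vj.
  apply: le_trans (rat_bound _ _) _ => //; first by apply: ltnW.
  by rewrite ler_nat; apply: deg_bound.
move=> [k [f [Hcopy [Hdisj Hcov]]]].
set one : 'I_p.+1 := inZp 1.
set om : 'I_p.+1 := ord_max.
set A := fun (t : 'I_k) (c : 'I_p.+1) => \sum_(x : V) (kap (f t x) == c : nat).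
have Tsum : forall c, \sum_(u : 'I_p.+1 * 'I_n) (kap u == c : nat) = \sum_t A t c.
  move=> c.
  set h := fun tx : 'I_k * V => f tx.1 tx.2.
  have hinj : {in [set: 'I_k * V] &, injective h}.
    move=> [t x] [t' y] _ _; rewrite /h /=.
    have [tt'|tt'] := eqVneq t t'.
      by subst t'; case: (Hcopy t) => fi _ /fi ->.
    by move=> ef; move: (Hdisj _ _ x y tt'); rewrite ef eqxx.
  have img : h @: [set: 'I_k * V] = [set: 'I_p.+1 * 'I_n].
    apply/setP => w; rewrite !inE; case: (Hcov w) => t [x <-].
    by apply/imsetP; exists (t, x); rewrite ?inE.
  have -> : \sum_(u : 'I_p.+1 * 'I_n) (kap u == c : nat)
     = \sum_(u in h @: [set: 'I_k * V]) (kap u == c : nat).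
    by rewrite img; apply: eq_bigl => u; rewrite inE.
  rewrite big_imset //= /A.
  rewrite (eq_bigl xpredT); last by move=> u; rewrite inE.
  by rewrite -(pair_bigA _ (fun (t : 'I_k) (x : V) => (kap (f t x) == c : nat))).
have ne0om : (0%R == om) = false.
  by apply/negbTE; rewrite -(inj_eq val_inj) /= eq_sym -lt0n; apply: ltnW.
have h1 : 1 %% p.+1 = 1 by rewrite modn_small // ltnS ltnW.
have ne0one : (0%R == one) = false.
  by apply/negbTE; rewrite -(inj_eq val_inj) /= h1.
have neomone : (om == one) = false.
  by apply/negbTE; rewrite -(inj_eq val_inj) /= h1 neq_ltn p2 orbT.
have Som := split_kap n0 om; rewrite ne0om eqxx Tsum in Som.
have Sone := split_kap n0 one; rewrite ne0one neomone Tsum in Sone.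
set g := gcdH e p.+1.
have Hmod : forall t, A t om = A t one %[mod g].
  move=> t.
  set c := [ffun x => kap (f t x)].
  have pc : proper_colb e c.
    apply/forallP => x; apply/forallP => y; apply/implyP => exy.
    rewrite !ffunE; case: (Hcopy t) => _ /(_ _ _ exy) /andP [_ //].
  have cc : forall i, #|col_class c i| = A t i.
    move=> i; rewrite /col_class -sum1_card big_mkcond /=; apply: eq_bigr => x _.
    by rewrite inE ffunE; case: (_ == _).
  have dv : forall i j, g %| A t i - A t j.
    move=> i j; rewrite -!cc.
    apply: dvdn_trans (big_gcd_dvd _ pc) _.
    apply: dvdn_trans (big_gcd_dvd (P := xpredT) _ (erefl true : xpredT i)) _.
    exact: (big_gcd_dvd (P := xpredT) _ (erefl true : xpredT j)).
  case: (leqP (A t one) (A t om)) => h.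
    by apply/eqP; rewrite eqn_mod_dvd.
  by apply/eqP; rewrite eq_sym eqn_mod_dvd ?dv // ltnW.
have : \sum_t A t om = \sum_t A t one %[mod g].
  by rewrite -modn_summ -[RHS]modn_summ; congr (_ %% _); apply: eq_bigr => t _.
have -> : \sum_t A t om = n.+1 by lia.
have -> : \sum_t A t one = n by lia.
move/eqP; rewrite eqn_mod_dvd // subSnn dvdn1 => /eqP g1.
by move: hg; rewrite -/g g1.
Qed.
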